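(* Let $k$ be a field of characteristic $0$, let $\mathcal C$ be a small category with finitely many objects $X_1,\dots,X_n$, and let $\alpha:L(\mathcal C)\to k$ be a pseudocharacter of $\mathcal C$. Let $A$ be the $k$-algebra of matrices $x=(x_{ij})_{1\le i,j\le n}$ with $x_{ij}\in k\,\mathrm{Hom}_{\mathcal C}(X_j,X_i)$ (finite $k$-linear combinations of morphisms), with multiplication $(xy)_{ij}=\sum_{l}x_{il}y_{lj}$ given by bilinearly extended composition (i.e. $A=\mathrm{End}(X_1\oplus\dots\oplus X_n)$ in the additive envelope of the $k$-linearization of $\mathcal C$), and let $\tau:A\to k$, $\tau(x)=\sum_{i=1}^n\alpha_{X_i}(x_{ii})$. Then $\tau(xy)=\tau(yx)$, $\tau$ is a pseudocharacter of $A$, and $$\deg_\tau(A)=\sum_{i=1}^n\deg_\alpha(X_i).$$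
   Context: Loops. $L(\mathcal C)$ is the set of pairs $(X,\beta)$, $\beta\in\mathrm{End}_{\mathcal C}(X)$, modulo the equivalence relation generated by $(X,\gamma\beta)\sim(Y,\beta\gamma)$ for $\beta:X\to Y$, $\gamma:Y\to X$. Pseudocharacters of algebras. For a $k$-algebra $A$ and a $k$-linear $\tau:A\to k$ with $\tau(ab)=\tau(ba)$, and $a_1,\dots,a_n\in A$, set $S^\tau_n(a_1,\dots,a_n)=\sum_{\sigma\in S_n}\mathrm{sgn}(\sigma)\prod_{c}\tau(a_{i_1}a_{i_2}\cdots a_{i_r})$, the product over all cycles $c=(i_1\,i_2\,\dots\,i_r)$ of $\sigma$ (fixed points included), where $\sigma(i_j)=i_{j+1}$. (This is the $\alpha$-evaluation of the closure of $(a_1\otimes\dots\otimes a_n)$ composed with the antisymmetrizer $\sum_\sigma\mathrm{sgn}(\sigma)\sigma$ in the Brauer category.) The degree $\deg_\tau(A)$ is the least integer $d\ge0$ such that $S^\tau_{d+1}$ vanishes identically on $A^{d+1}$ ($\infty$ if none); $\tau$ is a pseudocharacter of $A$ if $\deg_\tau(A)<\infty$. Pseudocharacters of categories. For $\alpha:L(\mathcal C)\to k$ and an object $X$, let $\alpha_X:k\,\mathrm{End}_{\mathcal C}(X)\to k$ be the linear extension of $\beta\mapsto\alpha([(X,\beta)])$ (it satisfies $\alpha_X(ab)=\alpha_X(ba)$). Put $\deg_\alpha(X)=\deg_{\alpha_X}(k\,\mathrm{End}_{\mathcal C}(X))$. The map $\alpha$ is a pseudocharacter of $\mathcal C$ (equivalently,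 a pseudo-TQFT for the Brauer envelope of $\mathcal C$) if $\deg_\alpha(X)<\infty$ for every object $X$. *)

(* Defs.v *)
From HB Require Import structures.
From mathcomp Require Import all_boot all_order all_algebra all_fingroup.
From mathcomp Require Import finmap.
From mathcomp Require Import boolp.
Set Implicit Arguments. Unset Strict Implicit. Unset Printing Implicit Defensive.
Import Order.TTheory GRing.Theory Num.Theory.
Local Open Scope ring_scope.
Local Open Scope fset_scope.

(* Pseudocharacters of (possibly non-unital) k-algebras, given only    *)
(* through their multiplication and a trace-like map tau : T -> k.     *)
Section Pseudo.
Variables (k : fieldType) (T : Type) (mul : T -> T -> T) (tau : T -> k).

Definition cycle_rep (m : nat) (s : 'S_m) (i : 'I_m) : bool :=
  [forall j in porbit s i, (i <= j)%N].

(* a_{i} a_{s i} a_{s^2 i} ... a_{s^(r-1) i}, r = length of the cycle of i *)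
Definition cycle_prod (m : nat) (s : 'S_m) (a : 'I_m -> T) (i : 'I_m) : T :=
  foldl (fun acc e => mul acc (a ((s ^+ e)%g i))) (a i)
        (iota 1 (#|porbit s i|).-1).

Definition Spc (m : nat) (a : 'I_m -> T) : k :=
  \sum_(s : 'S_m) (-1) ^+ odd_perm s *
     \prod_(i : 'I_m | cycle_rep s i) tau (cycle_prod s a i).

Definition Svanishes (m : nat) : Prop := forall a : 'I_m -> T, Spc a = 0.

Definition is_degree (d : nat) : Prop :=
  Svanishes d.+1 /\ forall e : nat, (e < d)%N -> ~ Svanishes e.+1.

Definition pseudochar : Prop := exists d : nat, Svanishes d.+1.

End Pseudo.

(* Small categories with objects X_0, ..., X_{n-1} (indexed by 'I_n).  *)
(* comp g f = g o f.                                                    *)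
Record fincat (n : nat) := FinCat {
  Mor : 'I_n -> 'I_n -> Type;
  comp : forall i j l : 'I_n, Mor j l -> Mor i j -> Mor i l;
  idm : forall i : 'I_n, Mor i i;
  compA : forall (i j l m : 'I_n) (h : Mor l m) (g : Mor j l) (f : Mor i j),
      comp h (comp g f) = comp (comp h g) f;
  comp1m : forall (i j : 'I_n) (f : Mor i j), comp (idm j) f = f;
  compm1 : forall (i j : 'I_n) (f : Mor i j), comp f (idm i) = f
}.
Arguments comp {n} _ {i j l}.

Section Linearization.
Variables (k : fieldType) (n : nat) (C : fincat n).

(* k Hom(X_i, X_j): finitely supported functions Mor(X_i,X_j) -> k *)
Definition kHom (i j : 'I_n) := {fsfun {classic (Mor C i j)} -> k for fun=> 0}.

Definition kadd (i j : 'I_n) (f g : kHom i j) : kHom i j :=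
  [fsfun c in finsupp f `|` finsupp g => (f c + g c)%R].

Definition kzero (i j : 'I_n) : kHom i j := [fsfun for fun=> 0].

(* bilinear extension of composition: (f o g) *)
Definition kcomp (i j l : 'I_n) (f : kHom j l) (g : kHom i j) : kHom i l :=
  [fsfun c in [fset (comp C a b : {classic (Mor C i l)})
                 | a : {classic (Mor C j l)} in finsupp f,
                   b : {classic (Mor C i j)} in finsupp g] =>
     \sum_(a <- finsupp f) \sum_(b <- finsupp g)
        (if (comp C a b : {classic (Mor C i l)}) == c then f a * g b else 0)].

(* Loop functions alpha : L(C) -> k, presented as functions on pairs
   (X, beta) which are constant on the generating relation. *)
Definition loop_fun (alpha : forall i : 'I_n, Mor C i i -> k) : Prop :=
  forall (i j : 'I_n) (b : Mor C i j) (g : Mor C j i),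
    alpha i (comp C g b) = alpha j (comp C b g).

Definition alphaX (alpha : forall i : 'I_n, Mor C i i -> k) (i : 'I_n)
  (f : kHom i i) : k :=
  \sum_(b <- finsupp f) f b * alpha i b.

Definition deg_alpha_is alpha (i : 'I_n) (d : nat) : Prop :=
  is_degree (fun f g : kHom i i => kcomp f g) (@alphaX alpha i) d.

Definition cat_pseudochar alpha : Prop :=
  forall i : 'I_n, pseudochar (fun f g : kHom i i => kcomp f g) (@alphaX alpha i).

Definition Amat := forall i j : 'I_n, kHom j i.

Definition Amul (x y : Amat) : Amat :=
  fun i j => \big[@kadd j i / kzero j i]_(l < n) kcomp (x i l) (y l j).

Definition Atau alpha (x : Amat) : k := \sum_(i < n) @alphaX alpha i (x i i).

End Linearization.

(* Main.v *)
Require Import Defs.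
From HB Require Import structures.
From mathcomp Require Import all_boot all_order all_algebra all_fingroup.
From mathcomp Require Import finmap boolp.

Module Part1.
Local Set Implicit Arguments. Local Unset Strict Implicit. Local Unset Printing Implicit Defensive.
Import Order.TTheory GRing.Theory Num.Theory.

Section PermFacts.
Variable m : nat.
Implicit Types (s : 'S_m) (x y : 'I_m).

Lemma permXS s e x : (s ^+ e.+1)%g x = s ((s ^+ e)%g x).
Proof. by rewrite expgSr permM. Qed.
Lemma permSX s e x : (s ^+ e.+1)%g x = (s ^+ e)%g (s x).
Proof. by rewrite expgS permM. Qed.
Lemma permX0 s x : (s ^+ 0)%g x = x.
Proof. by rewrite expg0 perm1. Qed.

Lemma porbit_ret s x : (s ^+ #|porbit s x|)%g x = x.
Proof. by rewrite permX iter_porbit. Qed.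

Lemma porbit_gt0 s x : 0 < #|porbit s x|.
Proof. by rewrite lt0n card_porbit_neq0. Qed.

Lemma porbit_neq s x e : 0 < e < #|porbit s x| -> (s ^+ e)%g x != x.
Proof.
case/andP=> e0 er; have U := uniq_traject_porbit s x.
have := nth_uniq x _ _ U; rewrite size_traject => H.
have := H e 0 er (porbit_gt0 s x); rewrite !nth_traject ?porbit_gt0 //= permX.
by move=> ->; rewrite -lt0n.
Qed.

Lemma porbit_card_eq s x r : 0 < r -> (s ^+ r)%g x = x ->
  (forall e, 0 < e < r -> (s ^+ e)%g x != x) -> #|porbit s x| = r.
Proof.
move=> r0 sr H; have p0 := porbit_gt0 s x.
case: (ltngtP #|porbit s x| r) => // [lt|gt].
  by have := H _ (introT andP (conj p0 lt)); rewrite porbit_ret eqxx.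
by have := porbit_neq (introT andP (conj r0 gt)); rewrite sr eqxx.
Qed.

Lemma porbit_iter_lt s x y : y \in porbit s x ->
  exists2 e, e < #|porbit s x| & y = (s ^+ e)%g x.
Proof.
rewrite porbit_traject => /trajectP [e lt ->]; exists e => //.
by rewrite permX.
Qed.

End PermFacts.

Lemma porbit_card_transport m m' (s : 'S_m) (t : 'S_m') x y (f : 'I_m -> 'I_m') :
  injective f -> (forall e, (t ^+ e)%g y = f ((s ^+ e)%g x)) ->
  #|porbit t y| = #|porbit s x|.
Proof.
move=> fi H; apply: porbit_card_eq; first exact: porbit_gt0.
  by rewrite H porbit_ret -(permX0 s x) -H permX0.
move=> e he; rewrite H -(permX0 t y) H permX0 (inj_eq fi).
exact: porbit_neq.
Qed.

Definition selector m (s : 'S_m) (Q : pred 'I_m) :=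
  (forall x, exists2 j, j \in porbit s x & Q j) /\
  (forall z z', Q z -> Q z' -> z' \in porbit s z -> z' = z).

Lemma porbit_same m (s : 'S_m) x y : y \in porbit s x -> porbit s y = porbit s x.
Proof. by rewrite -eq_porbit_mem => /eqP. Qed.

Lemma selector_rep m (s : 'S_m) : selector s (cycle_rep s).
Proof.
split.
  move=> x; case: (arg_minnP (fun j : 'I_m => nat_of_ord j) (porbit_id s x)) => j jx jmin.
  exists j => //; apply/forallP => w; apply/implyP => wj.
  by apply: jmin; rewrite -(porbit_same jx).
move=> z z' /forallP Qz /forallP Qz' zz'; apply/val_inj/eqP; rewrite eqn_leq.
rewrite (implyP (Qz' z)) ?(implyP (Qz z')) //.
by rewrite porbit_sym.
Qed.

Section BigSel.
Local Open Scope ring_scope.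
Variables (R : comRingType) (m : nat) (s : 'S_m) (f : 'I_m -> R).
Hypothesis fconst : forall x e, f ((s ^+ e)%g x) = f x.

Lemma inner_sel (Q : pred 'I_m) x : selector s Q ->
  \prod_(i | Q i && (porbit s i == porbit s x)) f i = f x.
Proof.
case=> ex un; have [j jx Qj] := ex x.
rewrite (big_pred1 j).
  by case/porbitP: jx => e ->; rewrite fconst.
move=> i /=; rewrite eq_porbit_mem; apply/andP/eqP => [[Qi ix]|->//].
apply: (un j i Qj Qi); by rewrite (porbit_same jx).
Qed.

Lemma big_sel (Q Q' : pred 'I_m) : selector s Q -> selector s Q' ->
  \prod_(i | Q i) f i = \prod_(i | Q' i) f i.
Proof.
move=> sQ sQ'.
rewrite (partition_big (fun i => porbit s i) (mem (porbits s))); last first.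
  by move=> i _; apply: imset_f.
rewrite [RHS](partition_big (fun i => porbit s i) (mem (porbits s))); last first.
  by move=> i _; apply: imset_f.
apply: eq_bigr => O /imsetP [x _ ->].
by rewrite !inner_sel.
Qed.
End BigSel.

End Part1.
Import Part1.

Module Part2.
Local Set Implicit Arguments. Local Unset Strict Implicit. Local Unset Printing Implicit Defensive.
Import Order.TTheory GRing.Theory Num.Theory.

Lemma foldl_ext (A B : Type) (f g : A -> B -> A) (x : A) (l : seq B) (P : pred B) :
  (forall acc e, P e -> f acc e = g acc e) -> all P l -> foldl f x l = foldl g x l.
Proof.
move=> H; elim: l x => //= e l IH x /andP [Pe Pl]; rewrite H //; exact: IH.
Qed.

Lemma foldl_map (A B C : Type) (f : A -> B -> A) (h : C -> B) z (l : seq C) :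
  foldl f z (map h l) = foldl (fun z x => f z (h x)) z l.
Proof. by elim: l z => //= c l IH z; rewrite IH. Qed.

Section Abstract.
Variables (k : fieldType) (T : Type) (mul : T -> T -> T) (tau : T -> k).

Local Notation cp := (cycle_prod mul).

Lemma cp_transport m m' (s : 'S_m) (t : 'S_m') x y (f : 'I_m -> 'I_m') a b :
  injective f -> (forall e, (t ^+ e)%g y = f ((s ^+ e)%g x)) ->
  (forall e, b (f ((s ^+ e)%g x)) = a ((s ^+ e)%g x)) ->
  cp t b y = cp s a x.
Proof.
move=> fi H Hb; rewrite /cycle_prod (porbit_card_transport fi H).
have -> : b y = a x by rewrite -(permX0 t y) H -{2}(permX0 s x) Hb.
apply: (@foldl_ext _ _ _ _ _ _ predT); last exact: all_predT.
move=> acc e _.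
by rewrite H Hb.
Qed.

Lemma cp_eq_on m (s : 'S_m) x a b :
  (forall e, a ((s ^+ e)%g x) = b ((s ^+ e)%g x)) -> cp s a x = cp s b x.
Proof.
move=> H; apply: (@cp_transport _ _ s s x x id) => // e; by rewrite H.
Qed.

Hypothesis mulA : forall x y z, mul x (mul y z) = mul (mul x y) z.
Hypothesis tauC : forall x y, tau (mul x y) = tau (mul y x).

Lemma foldl_mulA (g : nat -> T) x y l :
  foldl (fun acc e => mul acc (g e)) (mul x y) l =
  mul x (foldl (fun acc e => mul acc (g e)) y l).
Proof. by elim: l y => //= e l IH y; rewrite -mulA IH. Qed.

Lemma cp_rot m (s : 'S_m) a x : tau (cp s a (s x)) = tau (cp s a x).
Proof.
rewrite /cycle_prod.
have Ex : porbit s (s x) = porbit s x by have := porbit_perm s 1 x; rewrite expg1.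
rewrite Ex; have r0 := porbit_gt0 s x; have ret := porbit_ret s x.
move: r0 ret; case: #|porbit s x| => // -[|r] _ ret.
  by move: ret; rewrite expg1 /= => ->.
change (r.+2).-1 with r.+1.
have E1 : iota 1 r.+1 = rcons (iota 1 r) r.+1.
  by rewrite -[in LHS](addn1 r) iotaD /= add1n cats1.
rewrite [in LHS]E1 foldl_rcons -permSX ret.
rewrite [in RHS](_ : iota 1 r.+1 = 1 :: iota 2 r) //= foldl_mulA expg1.
have -> : iota 2 r = map S (iota 1 r) by rewrite -(iotaDl 1).
rewrite foldl_map tauC.
congr (tau (mul _ _)).
apply: (@foldl_ext _ _ _ _ _ _ predT); last exact: all_predT.
by move=> acc e _; rewrite permSX.
Qed.

Lemma cp_const m (s : 'S_m) a x e : tau (cp s a ((s ^+ e)%g x)) = tau (cp s a x).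
Proof. by elim: e => [|e IH]; rewrite ?permX0 // permXS cp_rot. Qed.

Local Open Scope ring_scope.

Definition Wt m (s : 'S_m) a := \prod_(i | cycle_rep s i) tau (cp s a i).

Lemma Wt_sel m (s : 'S_m) a Q : selector s Q ->
  Wt s a = \prod_(i | Q i) tau (cp s a i).
Proof.
move=> sQ; rewrite /Wt; apply: big_sel => //; first by move=> x e; apply: cp_const.
exact: selector_rep.
exact: sQ.
Qed.

Lemma SpcE m (a : 'I_m -> T) :
  Spc mul tau a = \sum_(s : 'S_m) (-1) ^+ odd_perm s * Wt s a.
Proof. by []. Qed.

End Abstract.

End Part2.
Import Part2.

Module Part3.
Local Set Implicit Arguments. Local Unset Strict Implicit. Local Unset Printing Implicit Defensive.
Import Order.TTheory GRing.Theory Num.Theory.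

Section Rec.
Variables (k : fieldType) (T : Type) (mul : T -> T -> T) (tau : T -> k).
Hypothesis mulA : forall x y z, mul x (mul y z) = mul (mul x y) z.
Hypothesis tauC : forall x y, tau (mul x y) = tau (mul y x).
Local Notation cp := (cycle_prod mul).

Variables (m : nat) (l : 'I_m.+1) (s' : 'S_m).
Local Notation L := (lift_perm l l s').

Lemma L_lift e j : (L ^+ e)%g (lift l j) = lift l ((s' ^+ e)%g j).
Proof.
elim: e => [|e IH]; first by rewrite !permX0.
by rewrite !permXS IH lift_perm_lift.
Qed.

Lemma L_l e : (L ^+ e)%g l = l.
Proof. by elim: e => [|e IH]; rewrite ?permX0 // permXS IH lift_perm_id. Qed.

Lemma L_card_l : #|porbit L l| = 1.
Proof.
apply: porbit_card_eq => //; first by rewrite L_l.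
by move=> e /andP [e0 e1]; move: e0; rewrite ltnNge -ltnS e1.
Qed.

Definition QL (z : 'I_m.+1) :=
  if unlift l z is Some j then cycle_rep s' j else true.

Lemma selector_QL : selector L QL.
Proof.
have [ex un] := selector_rep s'.
split.
  move=> x; case: (unliftP l x) => [j ->|->].
    have [j0 j0j rj0] := ex j; case/porbitP: j0j => e E; rewrite E in rj0.
    exists (lift l ((s' ^+ e)%g j)); first by rewrite -L_lift mem_porbit.
    by rewrite /QL liftK.
  by exists l; rewrite ?porbit_id // /QL unlift_none.
move=> z z' Qz Qz' /porbitP [e E]; subst z'.
case: (unliftP l z) Qz Qz' => [j ->|->]; last by rewrite L_l.
rewrite /QL L_lift !liftK => rj rj'.
by rewrite (un j _ rj rj' (mem_porbit _ _ _)).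
Qed.

Local Open Scope ring_scope.

Lemma Wt_L a : Wt mul tau L a = tau (a l) * Wt mul tau s' (fun j => a (lift l j)).
Proof.
rewrite (Wt_sel mulA tauC a selector_QL).
rewrite (bigD1_ord l) /QL ?unlift_none //.
congr (_ * _).
  by rewrite /cycle_prod L_card_l.
apply: eq_big => j; first by rewrite liftK.
move=> _; congr (tau _).
apply: (@cp_transport _ mul _ _ s' L j (lift l j) (lift l)) => //.
  exact: lift_inj.
move=> e; exact: L_lift.
Qed.


Local Close Scope ring_scope.

Variable y : 'I_m.
Local Notation z0 := (lift l y).
Local Notation sg := (L * tperm l z0)%g.
Local Notation r := #|porbit s' y|.

Lemma sg_l : sg l = z0.
Proof. by rewrite permM lift_perm_id tpermL. Qed.

Lemma sg_lift w : s' w != y -> sg (lift l w) = lift l (s' w).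
Proof.
move=> ne; rewrite permM lift_perm_lift tpermD //.
  exact: neq_lift.
by rewrite (inj_eq lift_inj) eq_sym.
Qed.

Lemma sg_lift_y w : s' w = y -> sg (lift l w) = l.
Proof. by move=> E; rewrite permM lift_perm_lift E tpermR. Qed.

Lemma sg_out j e : j \notin porbit s' y ->
  (sg ^+ e)%g (lift l j) = lift l ((s' ^+ e)%g j).
Proof.
move=> nj; elim: e => [|e IH]; first by rewrite !permX0.
rewrite [LHS]permXS IH sg_lift; first by rewrite permXS.
apply: contraNneq nj => E; rewrite porbit_sym -E -permXS; exact: mem_porbit.
Qed.

Lemma sg_in e : e < r -> (sg ^+ e.+1)%g l = lift l ((s' ^+ e)%g y).
Proof.
elim: e => [|e IH] lt; first by rewrite permX0 expg1 sg_l.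
rewrite [LHS]permXS IH ?(ltn_trans _ lt) // sg_lift; first by rewrite permXS.
by rewrite -permXS porbit_neq.
Qed.

Lemma sg_ret : (sg ^+ r.+1)%g l = l.
Proof.
have r0 := porbit_gt0 s' y.
move: r0 (@sg_in r.-1); case: r (porbit_ret s' y) => // r' ret _ H.
rewrite permXS H // sg_lift_y //= -permXS; exact: ret.
Qed.

Lemma sg_card_l : #|porbit sg l| = r.+1.
Proof.
apply: porbit_card_eq => //; first exact: sg_ret.
move=> [|e] //= lt; rewrite sg_in //.
by rewrite eq_sym neq_lift.
Qed.

Definition a' (a : 'I_m.+1 -> T) (j : 'I_m) :=
  if j == y then mul (a l) (a (lift l j)) else a (lift l j).

Lemma cp_sg_l a : cp sg a l = cp s' (a' a) y.
Proof.
rewrite /cycle_prod sg_card_l /=.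
have r0 := porbit_gt0 s' y.
move: r0 (@sg_in) (@porbit_neq _ s' y); case: r => // r' _ Hin Hneq /=.
rewrite expg1 sg_l /a' eqxx.
have -> : iota 2 r' = map S (iota 1 r') by rewrite -(iotaDl 1).
rewrite foldl_map.
apply: (@foldl_ext _ _ _ _ _ _ (fun e => 0 < e < r'.+1)).
  move=> acc e /andP [e0 lt]; rewrite Hin // ifN //.
  by apply: Hneq; rewrite e0.
by apply/allP => e; rewrite mem_iota => /andP [-> ]; rewrite add1n.
Qed.

Definition Qsg (z : 'I_m.+1) :=
  if unlift l z is Some j then cycle_rep s' j else false.

Definition Pin (z : 'I_m.+1) :=
  if unlift l z is Some j then j \in porbit s' y else true.

Lemma Pin_sg z : Pin z -> Pin (sg z).
Proof.
rewrite /Pin; case: (unliftP l z) => [w ->|->] /=; last by rewrite sg_l liftK porbit_id.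
move=> wy; case: (eqVneq (s' w) y) => [E|ne].
  by rewrite sg_lift_y // unlift_none.
rewrite sg_lift // liftK -(porbit_same wy) -{1}(expg1 s'); exact: mem_porbit.
Qed.

Lemma Pin_iter z e : Pin z -> Pin ((sg ^+ e)%g z).
Proof. by move=> Pz; elim: e => [|e IH]; rewrite ?permX0 // permXS Pin_sg. Qed.

Lemma in_orbit_l w : w \in porbit s' y -> lift l w \in porbit sg l.
Proof.
case/porbit_iter_lt => e lt ->; rewrite -sg_in //; exact: mem_porbit.
Qed.

Lemma selector_Qsg : selector sg Qsg.
Proof.
have [ex un] := selector_rep s'.
split.
  have Hl : exists2 j, j \in porbit sg l & Qsg j.
    have [j0 j0y rj0] := ex y; exists (lift l j0); first exact: in_orbit_l.
    by rewrite /Qsg liftK.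
  move=> x; case: (unliftP l x) => [w ->|->] //.
  case: (boolP (w \in porbit s' y)) => wy.
    by rewrite (porbit_same (in_orbit_l wy)).
  have [j0 j0j rj0] := ex w; case/porbitP: j0j => e E; rewrite E in rj0.
  exists (lift l ((s' ^+ e)%g w)); first by rewrite -sg_out // mem_porbit.
  by rewrite /Qsg liftK.
move=> z z' Qz Qz' /porbitP [e E]; subst z'.
case: (unliftP l z) Qz Qz' => [j ->|->]; last by rewrite /Qsg unlift_none.
rewrite /Qsg liftK => rj.
case: (boolP (j \in porbit s' y)) => jy.
  have : Pin ((sg ^+ e)%g (lift l j)) by apply: Pin_iter; rewrite /Pin liftK.
  rewrite /Pin; case: (unliftP l ((sg ^+ e)%g (lift l j))) => [j' ->|-> //].
  move=> j'y rj'; rewrite (un j j' rj rj') //.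
  by rewrite (porbit_same jy).
rewrite sg_out // liftK => rj'.
by rewrite (un j _ rj rj' (mem_porbit _ _ _)).
Qed.

Local Open Scope ring_scope.

Lemma Wt_sg a : Wt mul tau sg a = Wt mul tau s' (a' a).
Proof.
rewrite (Wt_sel mulA tauC a selector_Qsg) big_mkcond.
rewrite (bigD1_ord l) // {1}/Qsg unlift_none Monoid.mul1m.
rewrite /Wt [RHS]big_mkcond; apply: eq_bigr => j _.
rewrite /Qsg liftK; case: ifP => // rj.
case: (boolP (j \in porbit s' y)) => jy.
  case/porbit_iter_lt: (jy) => e lt ->.
  by rewrite -sg_in // !cp_const // cp_sg_l.
congr (tau _).
transitivity (cp s' (fun j => a (lift l j)) j).
  apply: (@cp_transport _ mul _ _ s' sg j (lift l j) (lift l)) => //.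
    exact: lift_inj.
  by move=> e; rewrite sg_out.
apply: cp_eq_on => e; rewrite /a' ifN //.
apply: contra jy => /eqP <-; rewrite porbit_sym; exact: mem_porbit.
Qed.

Lemma odd_sg : odd_perm sg = ~~ odd_perm s'.
Proof.
rewrite odd_permM odd_lift_perm odd_tperm addbb /= neq_lift.
by case: (odd_perm s').
Qed.

End Rec.


End Part3.
Import Part3.

Module Part4.
Local Set Implicit Arguments. Local Unset Strict Implicit. Local Unset Printing Implicit Defensive.
Import Order.TTheory GRing.Theory Num.Theory.

Section Rec2.
Variables (k : fieldType) (T : Type) (mul : T -> T -> T) (tau : T -> k).
Hypothesis mulA : forall x y z, mul x (mul y z) = mul (mul x y) z.
Hypothesis tauC : forall x y, tau (mul x y) = tau (mul y x).

Lemma Phi_inj m (l : 'I_m.+1) :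
  injective (fun p : 'S_m * 'I_m.+1 => (lift_perm l l p.1 * tperm l p.2)%g).
Proof.
move=> [s1 z1] [s2 z2] /= E.
have Ez : z1 = z2.
  by have := congr1 (fun s : 'S_m.+1 => s l) E; rewrite /= !permM !lift_perm_id !tpermL.
subst z2; move/mulIg: E => E; congr (_, _).
apply/permP => j; apply: (@lift_inj _ l).
by rewrite -!(lift_perm_lift l l) E.
Qed.

Local Open Scope ring_scope.

Lemma Spc_rec m (a : 'I_m.+1 -> T) (l : 'I_m.+1) :
  Spc mul tau a = tau (a l) * Spc mul tau (fun j => a (lift l j))
     - \sum_(y < m) Spc mul tau (a' mul l y a).
Proof.
have bij : bijective (fun p : 'S_m * 'I_m.+1 => (lift_perm l l p.1 * tperm l p.2)%g).
  apply: inj_card_bij; first exact: Phi_inj.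
  by rewrite card_prod !card_Sn card_ord factS mulnC.
rewrite SpcE (reindex _ (onW_bij _ bij)) /=.
rewrite -(pair_bigA _ (fun s z => (-1) ^+ odd_perm (lift_perm l l s * tperm l z)%g *
   Wt mul tau (lift_perm l l s * tperm l z)%g a)) /=.
under eq_bigr => s _ do rewrite (bigD1_ord l) //= tperm1 mulg1.
rewrite big_split /= SpcE mulr_sumr -sumrN exchange_big /=.
congr (_ + _).
  apply: eq_bigr => s _; rewrite Wt_L // odd_lift_perm !addbb /=.
  by rewrite mulrCA.
apply: eq_bigr => y _; rewrite SpcE -sumrN; apply: eq_bigr => s _.
rewrite Wt_sg // odd_sg.
by case: (odd_perm s); rewrite /= ?expr0 ?expr1 ?mulN1r ?mul1r ?opprK.
Qed.
End Rec2.

End Part4.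
Import Part4.

Module Part5.
Local Set Implicit Arguments. Local Unset Strict Implicit. Local Unset Printing Implicit Defensive.
Import Order.TTheory GRing.Theory Num.Theory.

Section Conseq.
Variables (k : fieldType) (T : Type) (mul : T -> T -> T) (tau : T -> k).
Hypothesis mulA : forall x y z, mul x (mul y z) = mul (mul x y) z.
Hypothesis tauC : forall x y, tau (mul x y) = tau (mul y x).
Local Open Scope ring_scope.

Lemma Svanishes_up d e : (d <= e)%N -> Svanishes mul tau d.+1 -> Svanishes mul tau e.+1.
Proof.
move=> le H; elim: e le => [|e IH] le.
  by move: le; rewrite leqn0 => /eqP <-.
move: le; rewrite leq_eqVlt => /orP [/eqP <- //| lt] a.
rewrite (Spc_rec mulA tauC a ord_max) IH // mulr0 big1 ?subr0 // => y _.
exact: IH.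
Qed.

Variable one : T.
Hypothesis mul1 : forall x, mul one x = x.

Definition ext m (a : 'I_m -> T) (j : 'I_m.+1) :=
  if unlift ord_max j is Some j' then a j' else one.

Lemma Spc_ext m (a : 'I_m -> T) :
  Spc mul tau (ext a) = (tau one - m%:R) * Spc mul tau a.
Proof.
rewrite (Spc_rec mulA tauC _ ord_max) /ext unlift_none.
have E1 : (fun j => match unlift ord_max (lift ord_max j) with
                    | Some j' => a j' | None => one end) = a.
  by apply: funext => j; rewrite liftK.
rewrite E1.
have E2 : forall y, a' mul ord_max y (ext a) = a.
  move=> y; apply: funext => j; rewrite /a' /ext liftK unlift_none.
  by case: ifP.
under eq_bigr => y _ do rewrite E2.
by rewrite sumr_const card_ord mulrBl mulr_natl.
Qed.

Lemma Spc0 (a : 'I_0 -> T) : Spc mul tau a = 1.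
Proof.
rewrite SpcE (big_pred1 1%g); last by move=> s; rewrite /= permS0 eqxx.
by rewrite odd_perm1 expr0 mul1r /Wt big_ord0.
Qed.

Lemma Spc_ones m : Spc mul tau (fun _ : 'I_m => one) = \prod_(i < m) (tau one - i%:R).
Proof.
elim: m => [|m IH]; first by rewrite Spc0 big_ord0.
have -> : (fun _ : 'I_m.+1 => one) = ext (fun _ : 'I_m => one).
  by apply: funext => j; rewrite /ext; case: unlift.
by rewrite Spc_ext IH big_ord_recr /= mulrC.
Qed.

Hypothesis char0 : [pchar k] =i pred0.

Lemma natr_inj0 (a b : nat) : (a%:R : k) = b%:R -> a = b.
Proof.
wlog le : a b / (a <= b)%N => [W|].
  by case: (leqP a b) => [|/ltnW] h E; [apply: W | symmetry; apply: W].
move=> E; have : ((b - a)%N%:R : k) == 0 by rewrite natrB // E subrr.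
rewrite (pcharf0P _).1 // subn_eq0 => le'; apply/eqP; by rewrite eqn_leq le le'.
Qed.

Lemma Svanishes_down e : Svanishes mul tau e.+1 -> tau one != e%:R -> Svanishes mul tau e.
Proof.
move=> H ne a; have := H (ext a); rewrite Spc_ext => /eqP.
by rewrite mulf_eq0 subr_eq0 (negbTE ne) /= => /eqP.
Qed.

Lemma degree_tau_one d : is_degree mul tau d -> tau one = d%:R.
Proof.
case=> Hv Hmin.
have := Hv (fun _ => one); rewrite Spc_ones => /eqP /prodf_eq0 [i _].
rewrite subr_eq0 => /eqP ti0.
have [i0 ti le] : exists2 i' : nat, tau one = i'%:R & (i' <= d)%N.
  by exists i; rewrite // -ltnS.
clear ti0; clear i; move: i0 ti le => i ti le.
case: (ltngtP i d) le => // [lt|<- //] _.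
exfalso; apply: (Hmin i lt).
have desc : forall g, (i + g <= d)%N -> Svanishes mul tau (i + g).+1 -> Svanishes mul tau i.+1.
  elim=> [|g IH] le' V; first by rewrite addn0 in V.
  rewrite addnS in le' V.
  apply: IH; first exact: ltnW.
  apply: (Svanishes_down V).
  rewrite ti; apply/negP => /eqP /natr_inj0 /eqP.
  by rewrite -{1}(addn0 i) -addnS eqn_add2l.
apply: (desc (d - i)%N); first by rewrite subnKC // ltnW.
by rewrite subnKC // ltnW.
Qed.
End Conseq.

End Part5.
Import Part5.

Module Part6.
Local Set Implicit Arguments. Local Unset Strict Implicit. Local Unset Printing Implicit Defensive.
Import Order.TTheory GRing.Theory Num.Theory.

Section Func.
Variables (k : fieldType) (T T' : Type) (mul : T -> T -> T) (tau : T -> k)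
  (mul' : T' -> T' -> T') (tau' : T' -> k) (phi : T -> T') (P : T -> Prop).
Hypothesis Pmul : forall x y, P x -> P y -> P (mul x y).
Hypothesis phimul : forall x y, P x -> P y -> phi (mul x y) = mul' (phi x) (phi y).
Hypothesis phitau : forall x, P x -> tau' (phi x) = tau x.

Lemma foldl_phi (g : nat -> T) x l : P x -> (forall e, P (g e)) ->
  P (foldl (fun acc e => mul acc (g e)) x l) /\
  phi (foldl (fun acc e => mul acc (g e)) x l) =
    foldl (fun acc e => mul' acc (phi (g e))) (phi x) l.
Proof.
move=> Px Pg; elim: l x Px => //= e l IH x Px.
have [H1 H2] := IH _ (Pmul Px (Pg e)); split => //.
by rewrite H2 phimul.
Qed.

Lemma Spc_phi m (a : 'I_m -> T) : (forall j, P (a j)) ->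
  Spc mul' tau' (fun j => phi (a j)) = Spc mul tau a.
Proof.
move=> Pa; rewrite !SpcE; apply: eq_bigr => s _; congr (_ * _)%R.
apply: eq_bigr => i _; rewrite /cycle_prod.
have [H1 H2] := foldl_phi (iota 1 #|porbit s i|.-1) (Pa i) (fun e => Pa ((s ^+ e)%g i)).
by rewrite -H2 phitau.
Qed.
End Func.

Section Add.
Variables (k : fieldType) (T : Type) (mul : T -> T -> T) (tau : T -> k) (add : T -> T -> T) (zero : T).
Hypothesis mulA : forall x y z, mul x (mul y z) = mul (mul x y) z.
Hypothesis tauC : forall x y, tau (mul x y) = tau (mul y x).
Hypothesis mulDl : forall x y z, mul (add x y) z = add (mul x z) (mul y z).
Hypothesis tauD : forall x y, tau (add x y) = (tau x + tau y)%R.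
Hypothesis add00 : add zero zero = zero.
Local Open Scope ring_scope.

Definition upd m (a : 'I_m -> T) (l : 'I_m) (v : T) (j : 'I_m) := if j == l then v else a j.

Definition Qadd m (s : 'S_m) (l : 'I_m) (j : 'I_m) :=
  if l \in porbit s j then j == l else cycle_rep s j.

Lemma selector_Qadd m (s : 'S_m) l : selector s (Qadd s l).
Proof.
have [ex un] := selector_rep s.
split.
  move=> x; case: (boolP (l \in porbit s x)) => lx.
    by exists l; [exact: lx | rewrite /Qadd porbit_id eqxx].
  have [j jx rj] := ex x; exists j => //.
  by rewrite /Qadd (porbit_same jx) (negbTE lx).
move=> z z' Qz Qz' zz'; have E := porbit_same zz'.
move: Qz Qz'; rewrite /Qadd E.
case: (l \in porbit s z) => [/eqP -> /eqP -> //|rz rz'].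
exact: (un z z' rz rz' zz').
Qed.

Lemma foldl_addl (g : nat -> T) x y l :
  foldl (fun acc e => mul acc (g e)) (add x y) l =
  add (foldl (fun acc e => mul acc (g e)) x l) (foldl (fun acc e => mul acc (g e)) y l).
Proof. by elim: l x y => //= e l IH x y; rewrite mulDl IH. Qed.

Lemma cp_upd_l m (s : 'S_m) a l v :
  cycle_prod mul s (upd a l v) l =
  foldl (fun acc e => mul acc (a ((s ^+ e)%g l))) v (iota 1%N #|porbit s l|.-1).
Proof.
rewrite /cycle_prod [upd a l v l]/upd eqxx.
apply: (@foldl_ext _ _ _ _ _ _ (fun e => 0 < e < #|porbit s l|)%N).
  move=> acc e he; rewrite /upd ifN //; exact: porbit_neq.
apply/allP => e; rewrite mem_iota => /andP [-> ]; rewrite add1n.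
by rewrite prednK // porbit_gt0.
Qed.

Lemma Wt_upd m (s : 'S_m) a l v : Wt mul tau s (upd a l v) =
  tau (cycle_prod mul s (upd a l v) l) *
  \prod_(j | Qadd s l j && (j != l)) tau (cycle_prod mul s a j).
Proof.
rewrite (Wt_sel mulA tauC _ (selector_Qadd s l)) (bigD1 l); last first.
  by rewrite /Qadd porbit_id.
congr (_ * _); apply: eq_bigr => j /andP [Qj jl].
congr (tau _); apply: cp_eq_on => e; rewrite /upd ifN //.
move: Qj; rewrite /Qadd; case: ifP => [_ /eqP E|lj _]; first by rewrite E eqxx in jl.
by apply: contraFN lj => /eqP <-; exact: mem_porbit.
Qed.

Lemma Spc_add m (a : 'I_m -> T) l x y :
  Spc mul tau (upd a l (add x y)) = Spc mul tau (upd a l x) + Spc mul tau (upd a l y).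
Proof.
rewrite !SpcE -big_split; apply: eq_bigr => s _ /=.
by rewrite -mulrDr !Wt_upd !cp_upd_l foldl_addl tauD mulrDl.
Qed.

Lemma Spc_zero m (a : 'I_m -> T) l : Spc mul tau (upd a l zero) = 0.
Proof.
have := Spc_add a l zero zero; rewrite add00 => E.
by apply: (addrI (Spc mul tau (upd a l zero))); rewrite addr0 -E.
Qed.
End Add.

End Part6.
Import Part6.

Module Part7.
Local Set Implicit Arguments. Local Unset Strict Implicit. Local Unset Printing Implicit Defensive.
Import Order.TTheory GRing.Theory Num.Theory.
Local Open Scope ring_scope.

Section KHom.
Variables (k : fieldType) (n : nat) (C : fincat n).
Local Notation kH := (kHom k C).

Definition sumf (i j : 'I_n) (f : kH i j) (h : Mor C i j -> k) : k :=
  \sum_(a <- finsupp f) f a * h a.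

Lemma sumf_incl i j (f : kH i j) h (S : {fset {classic (Mor C i j)}}) :
  (finsupp f `<=` S)%fset -> sumf f h = \sum_(a <- S) f a * h a.
Proof.
move=> sub; rewrite /sumf; apply: big_fset_incl => // x _ nx.
by rewrite fsfun_dflt // mul0r.
Qed.

Lemma sumf0 i j (f : kH i j) h : (forall a, f a = 0) -> sumf f h = 0.
Proof. by move=> H; rewrite /sumf big1 // => a _; rewrite H mul0r. Qed.

Lemma kaddE i j (f g : kH i j) c : kadd f g c = f c + g c.
Proof.
rewrite /kadd fsfunE; case: ifP => // /negbT; rewrite in_fsetU negb_or.
by case/andP => /fsfun_dflt -> /fsfun_dflt ->; rewrite addr0.
Qed.

Lemma kzeroE i j c : kzero k C i j c = 0.
Proof. by rewrite /kzero fsfunE. Qed.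

Lemma sumf_add i j (f g : kH i j) h : sumf (kadd f g) h = sumf f h + sumf g h.
Proof.
have sf : (finsupp f `<=` finsupp f `|` finsupp g)%fset by apply: fsubsetUl.
have sg : (finsupp g `<=` finsupp f `|` finsupp g)%fset by apply: fsubsetUr.
have sfg : (finsupp (kadd f g) `<=` finsupp f `|` finsupp g)%fset.
  apply/fsubsetP => c; rewrite mem_finsupp kaddE in_fsetU !mem_finsupp.
  by apply: contraR; rewrite negb_or !negbK => /andP [/eqP -> /eqP ->]; rewrite addr0.
rewrite (sumf_incl _ sf) (sumf_incl _ sg) (sumf_incl _ sfg) -big_split.
by apply: eq_bigr => c _; rewrite kaddE mulrDl.
Qed.

Lemma sumf_zero i j h : sumf (kzero k C i j) h = 0.
Proof. by apply: sumf0 => a; rewrite kzeroE. Qed.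

Lemma sumf_big i j I (r : seq I) (P : pred I) (F : I -> kH i j) h :
  sumf (\big[@kadd _ _ C i j / kzero k C i j]_(x <- r | P x) F x) h =
  \sum_(x <- r | P x) sumf (F x) h.
Proof.
by apply: (big_morph (fun f => sumf f h)) => [f g|]; rewrite ?sumf_add ?sumf_zero.
Qed.

Lemma evalf_big i j I (r : seq I) (P : pred I) (F : I -> kH i j) c :
  (\big[@kadd _ _ C i j / kzero k C i j]_(x <- r | P x) F x) c =
  \sum_(x <- r | P x) F x c.
Proof.
by apply: (big_morph (fun f : kH i j => f c)) => [f g|]; rewrite ?kaddE ?kzeroE.
Qed.

Lemma sumf_linr i j (f : kH i j) h1 h2 :
  sumf f (fun a => h1 a + h2 a) = sumf f h1 + sumf f h2.
Proof. by rewrite /sumf -big_split; apply: eq_bigr => a _; rewrite mulrDr. Qed.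

Lemma sumf_sumr i j (f : kH i j) I (r : seq I) (P : pred I) (h : I -> Mor C i j -> k) :
  sumf f (fun a => \sum_(x <- r | P x) h x a) = \sum_(x <- r | P x) sumf f (h x).
Proof.
rewrite /sumf exchange_big; apply: eq_bigr => a _; by rewrite mulr_sumr.
Qed.

Lemma sumf_scal i j (f : kH i j) h c : sumf f (fun a => c * h a) = c * sumf f h.
Proof. by rewrite /sumf mulr_sumr; apply: eq_bigr => a _; rewrite mulrCA. Qed.

Lemma sumf_ext i j (f : kH i j) h1 h2 : (forall a, h1 a = h2 a) -> sumf f h1 = sumf f h2.
Proof. by move=> H; apply: eq_bigr => a _; rewrite H. Qed.

Lemma sumf_ind i j (f : kH i j) (c : {classic (Mor C i j)}) :
  sumf f (fun b => ((b : {classic (Mor C i j)}) == c)%:R) = f c.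
Proof.
rewrite /sumf; case: (finsuppP f c) => [nc|cin].
  rewrite big1_seq // => a /andP [_ ain]; case: eqP => [E|]; last by rewrite mulr0.
  by subst a; rewrite ain in nc.
rewrite (bigD1_seq c) //=; last exact: fset_uniq.
rewrite (_ : (c == c) = true); last exact/eqP.
rewrite mulr1 big1 ?addr0 // => a /negbTE ->.
by rewrite mulr0.
Qed.

Lemma sum_eq_ind (T : choiceType) (S : {fset T}) x (F : T -> k) :
  x \in S -> \sum_(c <- S) ((x == c)%:R * F c) = F x.
Proof.
move=> xS; rewrite (bigD1_seq x) //=.
rewrite (_ : (x == x) = true); last exact/eqP.
rewrite mul1r big1 ?addr0 // => c; rewrite eq_sym => /negbTE ->.
by rewrite mul0r.
Qed.

Lemma kcompE i j l (f : kH j l) (g : kH i j) c :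
  kcomp f g c = sumf f (fun a => sumf g (fun b =>
      ((Defs.comp C a b : {classic (Mor C i l)}) == c)%:R)).
Proof.
rewrite /kcomp fsfunE /sumf; case: ifP => [_|nin].
  apply: eq_bigr => a _; rewrite mulr_sumr; apply: eq_bigr => b _.
  by case: eqP; rewrite ?mulr1 ?mulr0.
symmetry; apply: big1_seq => a /andP [_ ain]; rewrite big1_seq ?mulr0 //.
move=> b /andP [_ bin]; case: eqP; rewrite ?mulr0 // => E.
move: nin; rewrite -E; case/negP.
by apply/imfset2P; exists a => //; exists b.
Qed.

Lemma kcomp_push i j l (f : kH j l) (g : kH i j) (H : Mor C i l -> k) :
  sumf (kcomp f g) H = sumf f (fun a => sumf g (fun b => H (Defs.comp C a b))).
Proof.
pose S := ([fset (Defs.comp C a b : {classic (Mor C i l)})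
           | a : {classic (Mor C j l)} in finsupp f,
             b : {classic (Mor C i j)} in finsupp g])%fset.
have sub : (finsupp (kcomp f g) `<=` S)%fset.
  apply/fsubsetP => c; rewrite mem_finsupp /kcomp fsfunE.
  by case: ifP => //; rewrite eqxx.
rewrite (sumf_incl _ sub) /sumf.
transitivity (\sum_(c <- S) \sum_(a <- finsupp f) \sum_(b <- finsupp g)
   (f a * g b * (((Defs.comp C a b : {classic (Mor C i l)}) == c)%:R * H c))).
  apply: eq_bigr => c _; rewrite kcompE /sumf.
  rewrite big_distrl; apply: eq_bigr => a _ /=.
  rewrite -mulrA big_distrl big_distrr; apply: eq_bigr => b _ /=; by rewrite !mulrA.
rewrite exchange_big; apply: eq_big_seq => a ain; rewrite exchange_big mulr_sumr.
apply: eq_big_seq => b bin; rewrite -mulr_sumr -mulrA; congr (_ * (_ * _)).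
apply: sum_eq_ind.
by apply/imfset2P; exists a => //; exists b.
Qed.

Definition kid (i : 'I_n) : kH i i :=
  [fsfun c in [fset (Defs.idm C i : {classic (Mor C i i)})]%fset => (1 : k)].

Lemma kidE i c : kid i c = ((c == (Defs.idm C i : {classic (Mor C i i)})))%:R.
Proof. by rewrite /kid fsfunE in_fset1; case: ifP. Qed.

Lemma sumf_kid i h : sumf (kid i) h = h (Defs.idm C i).
Proof.
have sub : (finsupp (kid i) `<=` [fset (Defs.idm C i : {classic (Mor C i i)})])%fset.
  apply/fsubsetP => c; rewrite mem_finsupp kidE in_fset1.
  by case: (c == _) => //; rewrite eqxx.
rewrite (sumf_incl _ sub) big_seq_fset1 kidE.
by rewrite (_ : (_ == _) = true) ?mul1r //; apply/eqP.
Qed.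

Lemma kcomp1 i l (f : kH i l) : kcomp (kid l) f = f.
Proof.
apply/fsfunP => c; rewrite kcompE sumf_kid -(sumf_ind f c).
by apply: sumf_ext => b; rewrite Defs.comp1m.
Qed.

Lemma sumf_swap i j i' j' (f : kH i j) (g : kH i' j') F :
  sumf f (fun a => sumf g (fun b => F a b)) = sumf g (fun b => sumf f (fun a => F a b)).
Proof.
rewrite /sumf; under eq_bigr => a _ do rewrite big_distrr.
rewrite exchange_big; apply: eq_bigr => b _; rewrite big_distrr; apply: eq_bigr => a _ /=.
by rewrite !mulrA (mulrC (f a)).
Qed.

Lemma kcompA i j l q (f : kH l q) (g : kH j l) (h : kH i j) :
  kcomp f (kcomp g h) = kcomp (kcomp f g) h.
Proof.
apply/fsfunP => c; rewrite !kcompE kcomp_push.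
apply: sumf_ext => a; rewrite kcomp_push; apply: sumf_ext => b.
by apply: sumf_ext => d; rewrite Defs.compA.
Qed.

Lemma alphaX_comp (alpha : forall i : 'I_n, Mor C i i -> k) i j (f : kH j i) (g : kH i j) :
  alphaX alpha (kcomp f g) = sumf f (fun a => sumf g (fun b => alpha i (Defs.comp C a b))).
Proof. exact: kcomp_push. Qed.

Lemma alphaX_loop (alpha : forall i : 'I_n, Mor C i i -> k) (Ha : loop_fun alpha)
   i j (f : kH j i) (g : kH i j) :
  alphaX alpha (kcomp f g) = alphaX alpha (kcomp g f).
Proof.
rewrite !alphaX_comp sumf_swap; apply: sumf_ext => b; apply: sumf_ext => a.
exact: Ha.
Qed.

End KHom.

End Part7.
Import Part7.

Module Part8.
Local Set Implicit Arguments. Local Unset Strict Implicit. Local Unset Printing Implicit Defensive.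
Import Order.TTheory GRing.Theory Num.Theory.
Local Open Scope ring_scope.

Section AmatSec.
Variables (k : fieldType) (n : nat) (C : fincat n).
Variable (alpha : forall i : 'I_n, Mor C i i -> k).
Hypothesis Halpha : loop_fun alpha.
Local Notation kH := (kHom k C).
Local Notation AM := (Amat k C).

Lemma AmatP (x y : AM) : (forall i j c, x i j c = y i j c) -> x = y.
Proof.
move=> H; apply: functional_extensionality_dep => i.
apply: functional_extensionality_dep => j; apply/fsfunP => c; exact: H.
Qed.

Lemma AmulE (x y : AM) i j c : Amul x y i j c = \sum_(l < n) kcomp (x i l) (y l j) c.
Proof. by rewrite /Amul evalf_big. Qed.

Lemma kcomp_addl i j l (f f' : kH j l) (g : kH i j) c :
  kcomp (kadd f f') g c = kcomp f g c + kcomp f' g c.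
Proof. by rewrite !kcompE sumf_add. Qed.

Lemma kcomp_bigl i j l I (r : seq I) (P : pred I) (F : I -> kH j l) (g : kH i j) c :
  kcomp (\big[@kadd _ _ C j l / kzero k C j l]_(x <- r | P x) F x) g c =
  \sum_(x <- r | P x) kcomp (F x) g c.
Proof. by rewrite kcompE sumf_big; apply: eq_bigr => x _; rewrite kcompE. Qed.

Lemma kcomp_bigr i j l I (r : seq I) (P : pred I) (f : kH j l) (F : I -> kH i j) c :
  kcomp f (\big[@kadd _ _ C i j / kzero k C i j]_(x <- r | P x) F x) c =
  \sum_(x <- r | P x) kcomp f (F x) c.
Proof.
rewrite kcompE (sumf_ext _ (fun a => sumf_big _ _ _ _)) sumf_sumr.
by apply: eq_bigr => x _; rewrite kcompE.
Qed.

Lemma kcomp_0l i j l (f : kH j l) (g : kH i j) c : (forall a, f a = 0) -> kcomp f g c = 0.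
Proof. by move=> H; rewrite kcompE sumf0. Qed.

Lemma kcomp_0r i j l (f : kH j l) (g : kH i j) c : (forall b, g b = 0) -> kcomp f g c = 0.
Proof.
move=> H; rewrite kcompE (sumf_ext _ (fun a => sumf0 _ H)).
by rewrite /sumf big1 // => a _; rewrite mulr0.
Qed.


Definition Aadd (x y : AM) : AM := fun i j => kadd (x i j) (y i j).
Definition Azero : AM := fun i j => kzero k C j i.
Definition Aone : AM := fun i j =>
  match j =P i with
  | ReflectT e => eq_rect j (fun z => kH j z) (kid k C j) i e
  | ReflectF _ => kzero k C j i
  end.

Lemma Aone_ii i : Aone i i = kid k C i.
Proof. by rewrite /Aone; case: eqP => // e; rewrite (eq_axiomK e). Qed.

Lemma Aone_ij i j : j != i -> Aone i j = kzero k C j i.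
Proof. by rewrite /Aone; case: eqP. Qed.

Lemma Amul1 (x : AM) : Amul Aone x = x.
Proof.
apply: AmatP => i j c; rewrite AmulE (bigD1 i) //= Aone_ii kcomp1 big1 ?addr0 //.
move=> l li; rewrite Aone_ij //; apply: kcomp_0l => a; exact: kzeroE.
Qed.

Lemma Atau_one : Atau alpha Aone = \sum_(i < n) @alpha i (Defs.idm C i).
Proof. by apply: eq_bigr => i _; rewrite Aone_ii; apply: sumf_kid. Qed.

Lemma Atau_add (x y : AM) : Atau alpha (Aadd x y) = Atau alpha x + Atau alpha y.
Proof. by rewrite /Atau -big_split; apply: eq_bigr => i _; apply: sumf_add. Qed.

Lemma Amul_addl (x y z : AM) : Amul (Aadd x y) z = Aadd (Amul x z) (Amul y z).
Proof.
apply: AmatP => i j c; rewrite /Aadd kaddE !AmulE -big_split.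
by apply: eq_bigr => l _; rewrite kcomp_addl.
Qed.

Lemma Aadd00 : Aadd Azero Azero = Azero.
Proof. by apply: AmatP => i j c; rewrite /Aadd kaddE /Azero kzeroE addr0. Qed.

Lemma AmulA (x y z : AM) : Amul x (Amul y z) = Amul (Amul x y) z.
Proof.
apply: AmatP => i j c; rewrite !AmulE.
under eq_bigr => l _ do rewrite kcomp_bigr.
under [RHS]eq_bigr => l _ do rewrite kcomp_bigl.
rewrite exchange_big; apply: eq_bigr => l _; apply: eq_bigr => l' _.
by rewrite kcompA.
Qed.

Lemma alphaX_big i I (r : seq I) (P : pred I) (F : I -> kH i i) :
  alphaX alpha (\big[@kadd _ _ C i i / kzero k C i i]_(x <- r | P x) F x) =
  \sum_(x <- r | P x) alphaX alpha (F x).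
Proof. exact: sumf_big. Qed.

Lemma Atau_trace (x y : AM) : Atau alpha (Amul x y) = Atau alpha (Amul y x).
Proof.
rewrite /Atau /Amul.
under eq_bigr => i _ do rewrite alphaX_big.
under [RHS]eq_bigr => i _ do rewrite alphaX_big.
rewrite [RHS]exchange_big; apply: eq_bigr => i _; apply: eq_bigr => l _.
exact: alphaX_loop.
Qed.

Definition sup (t s : 'I_n) (x : AM) :=
  forall i j c, ~~ ((i == t) && (j == s)) -> x i j c = 0.

Lemma sup_mul t s s' u (x y : AM) : sup t s x -> sup s' u y -> sup t u (Amul x y).
Proof.
move=> Hx Hy i j c H; rewrite AmulE big1 // => l _.
case: (boolP (i == t)) H => it /= H.
  apply: kcomp_0r => b; apply: Hy; by rewrite (negbTE H) andbF.
apply: kcomp_0l => a; apply: Hx; by rewrite (negbTE it).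
Qed.

Lemma sup_tau_off t s (x : AM) : sup t s x -> t != s -> Atau alpha x = 0.
Proof.
move=> Hx ts; rewrite /Atau big1 // => i _; rewrite /alphaX big1 // => b _.
rewrite Hx ?mul0r //; case: (i =P t) => //= ->; exact: ts.
Qed.

Lemma sup_tau_cc c (x : AM) : sup c c x -> Atau alpha x = alphaX alpha (x c c).
Proof.
move=> Hx; rewrite /Atau (bigD1 c) //= big1 ?addr0 // => i ic.
rewrite /alphaX big1 // => b _; rewrite Hx ?mul0r //; by rewrite (negbTE ic).
Qed.

Lemma sup_mul_cc c (x y : AM) : sup c c x -> sup c c y ->
  Amul x y c c = kcomp (x c c) (y c c).
Proof.
move=> Hx Hy; apply/fsfunP => d; rewrite AmulE (bigD1 c) //= big1 ?addr0 //.
move=> l lc; apply: kcomp_0l => a; apply: Hx; by rewrite eqxx (negbTE lc).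
Qed.

Definition proj (t s : 'I_n) (x : AM) : AM :=
  fun i j => if (i == t) && (j == s) then x i j else kzero k C j i.

Lemma sup_proj t s x : sup t s (proj t s x).
Proof. by move=> i j c H; rewrite /proj (negbTE H) kzeroE. Qed.

Lemma Abig_eval I (r : seq I) (P : pred I) (F : I -> AM) i j c :
  (\big[Aadd/Azero]_(p <- r | P p) F p) i j c = \sum_(p <- r | P p) F p i j c.
Proof.
by apply: (big_morph (fun x : AM => x i j c)) => [x y|]; rewrite ?kaddE ?kzeroE.
Qed.

Lemma proj_sum (x : AM) : x = \big[Aadd/Azero]_(p : 'I_n * 'I_n) proj p.1 p.2 x.
Proof.
apply: AmatP => i j c; rewrite Abig_eval (bigD1 (i, j)) //= /proj !eqxx /=.
rewrite big1 ?addr0 // => -[a b] /= ne.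
case: ifP => [/andP [/eqP ia /eqP jb]|_]; last exact: kzeroE.
by subst; rewrite eqxx in ne.
Qed.

End AmatSec.

End Part8.
Import Part8.

Module Part9.
Local Set Implicit Arguments. Local Unset Strict Implicit. Local Unset Printing Implicit Defensive.
Import Order.TTheory GRing.Theory Num.Theory.
Local Open Scope ring_scope.

Section MainSec.
Variables (k : fieldType) (n : nat) (C : fincat n) (alpha : forall i : 'I_n, Mor C i i -> k).
Hypothesis Halpha : loop_fun alpha.
Local Notation AM := (Amat k C).
Local Notation SA := (Spc (@Amul k n C) (Atau alpha)).

Let mulA_A := @AmulA k n C.
Let tauC_A := @Atau_trace k n C alpha Halpha.

Lemma ZZ m : forall (a : 'I_m -> AM) (t s : 'I_m -> 'I_n) c,
  (forall j, sup (t j) (s j) (a j)) -> (forall j, s j = c) ->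
  (exists l, t l != c) -> SA a = 0.
Proof.
elim: m => [|m IH] a t s c Hs Hsc [l tl]; first by move: tl; case: l.
rewrite (Spc_rec mulA_A tauC_A a l) (sup_tau_off alpha (Hs l)); last by rewrite Hsc.
rewrite mul0r sub0r big1 ?oppr0 // => y _.
apply: (IH _ (fun j => if j == y then t l else t (lift l j)) (fun j => s (lift l j)) c).
- move=> j; rewrite /a'; case: ifP => _; last exact: Hs.
  exact: sup_mul (Hs l) (Hs (lift l j)).
- by move=> j; exact: Hsc.
- by exists y; rewrite eqxx.
Qed.

Definition cnt m (s : 'I_m -> 'I_n) (c : 'I_n) : nat := (\sum_(j < m) (s j == c))%N.

Lemma cnt_lift m (s : 'I_m.+1 -> 'I_n) l c :
  cnt s c = ((s l == c) + cnt (fun j => s (lift l j)) c)%N.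
Proof. by rewrite /cnt (bigD1_ord l). Qed.

Variable d : 'I_n -> nat.
Hypothesis Hd : forall c e, (d c <= e)%N ->
  Svanishes (fun f g : kHom k C c c => kcomp f g) (@alphaX k n C alpha c) e.+1.

Lemma WW m : forall (a : 'I_m -> AM) (t s : 'I_m -> 'I_n) c,
  (forall j, sup (t j) (s j) (a j)) -> (d c < cnt s c)%N -> SA a = 0.
Proof.
elim: m => [|m IH] a t s c Hs Hc; first by rewrite /cnt big_ord0 in Hc.
case: (pselect (exists l, s l != c)) => [[l sl]|H1].
  rewrite (Spc_rec mulA_A tauC_A a l).
  rewrite (cnt_lift s l) (negbTE sl) add0n in Hc.
  have E1 : SA (fun j => a (lift l j)) = 0.
    by apply: (IH _ (fun j => t (lift l j)) (fun j => s (lift l j)) c) => // j; exact: Hs.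
  rewrite E1 mulr0 sub0r big1 ?oppr0 // => y _.
  apply: (IH _ (fun j => if j == y then t l else t (lift l j)) (fun j => s (lift l j)) c) => //.
  move=> j; rewrite /a'; case: ifP => _; last exact: Hs.
  exact: sup_mul (Hs l) (Hs (lift l j)).
have Hsc : forall j, s j = c.
  move=> j; apply/eqP; case: eqP => // ne; exfalso; apply: H1; exists j; exact/eqP.
case: (pselect (exists l, t l != c)) => [ex|H2]; first exact: (ZZ Hs Hsc ex).
have Htc : forall j, t j = c.
  move=> j; apply/eqP; case: eqP => // ne; exfalso; apply: H2; exists j; exact/eqP.
have Hcc : forall j, sup c c (a j) by move=> j; rewrite -{1}(Htc j) -(Hsc j).
rewrite -(@Spc_phi _ _ _ _ _ (fun f g : kHom k C c c => kcomp f g) (@alphaX k n C alpha c)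
   (fun x : AM => x c c) (sup c c)) //.
- apply: Hd; move: Hc; rewrite /cnt.
  have -> : (\sum_(j < m.+1) (s j == c) = m.+1)%N.
    rewrite (eq_bigr (fun _ => 1%N)) ?sum1_card ?card_ord // => j _.
    by rewrite Hsc eqxx.
  by [].
- by move=> x y Hx Hy; exact: sup_mul Hx Hy.
- by move=> x y Hx Hy; rewrite sup_mul_cc.
- by move=> x Hx; rewrite (sup_tau_cc alpha Hx).
Qed.


Lemma pigeon m (s : 'I_m -> 'I_n) : (\sum_(c < n) d c < m)%N ->
  exists c, (d c < cnt s c)%N.
Proof.
move=> lt; case: (pselect (exists c, (d c < cnt s c)%N)) => // H; exfalso.
have le : forall c, (cnt s c <= d c)%N.
  move=> c; rewrite leqNgt; apply/negP => h; apply: H; exists c; exact: h.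
have Em : m = (\sum_(c < n) cnt s c)%N.
  rewrite /cnt exchange_big /= -[m in LHS]card_ord -sum1_card.
  apply: eq_bigr => j _; rewrite (bigD1 (s j)) //= eqxx big1 // => c.
  by rewrite eq_sym => /negbTE ->.
have : (m <= \sum_(c < n) d c)%N by rewrite Em; apply: leq_sum => c _.
by rewrite leqNgt lt.
Qed.

Lemma Vall m (a : 'I_m -> AM) : (\sum_(c < n) d c < m)%N -> SA a = 0.
Proof.
move=> lt.
suff V : forall kk (b : 'I_m -> AM), (forall j : 'I_m, (kk <= j)%N ->
    exists ts : 'I_n * 'I_n, sup ts.1 ts.2 (b j)) -> SA b = 0.
  by apply: (V m) => j; rewrite leqNgt ltn_ord.
elim=> [|kk IH] b Hb.
  pose ts j := projT1 (cid (Hb j (leq0n _))).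
  have Hts : forall j, sup (ts j).1 (ts j).2 (b j) := fun j => projT2 (cid (Hb j (leq0n _))).
  have [c Hc] := pigeon (fun j => (ts j).2) lt.
  exact: (WW (t := fun j => (ts j).1) Hts Hc).
case: (ltnP kk m) => [km|mk]; last first.
  apply: IH => j kj; exfalso.
  by have := leq_trans mk kj; rewrite leqNgt ltn_ord.
pose l := Ordinal km.
have E : upd b l (b l) = b by apply: funext => j; rewrite /upd; case: eqP => // ->.
rewrite -E (proj_sum (b l)).
rewrite (big_morph (fun v => SA (upd b l v))
   (Spc_add mulA_A tauC_A (@Amul_addl k n C) (@Atau_add k n C alpha) b l)
   (Spc_zero mulA_A tauC_A (@Amul_addl k n C) (@Atau_add k n C alpha) (@Aadd00 k n C) b l)).
rewrite big1 // => p _; apply: IH => j kj.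
case: (eqVneq j l) => [->|jl].
  by exists p; rewrite /upd eqxx; exact: sup_proj.
rewrite /upd (negbTE jl); apply: Hb; rewrite ltn_neqAle kj andbT.
apply: contra jl => /eqP E'; apply/eqP/val_inj => /=; by rewrite E'.
Qed.

End MainSec.

End Part9.
Import Part9.

Import GRing.Theory.
Local Open Scope ring_scope.

Theorem mainTheorem5 (k : fieldType) (char0 : [pchar k] =i pred0)
  (n : nat) (C : fincat n) (alpha : forall i : 'I_n, Mor C i i -> k)
  (Halpha : loop_fun alpha) (Hpc : cat_pseudochar alpha) :
  (forall x y : Amat k C, Atau alpha (Amul x y) = Atau alpha (Amul y x)) /\
  pseudochar (@Amul k n C) (Atau alpha) /\
  (forall degs : 'I_n -> nat,
     (forall i : 'I_n, deg_alpha_is alpha i (degs i)) ->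
     is_degree (@Amul k n C) (Atau alpha) (\sum_(i < n) degs i)%N).
Proof.
have mulA_c : forall c (f g h : kHom k C c c), kcomp f (kcomp g h) = kcomp (kcomp f g) h.
  by move=> c f g h; apply: kcompA.
have tauC_c : forall c (f g : kHom k C c c),
    alphaX alpha (kcomp f g) = alphaX alpha (kcomp g f).
  by move=> c f g; apply: alphaX_loop.
split; first exact: Atau_trace.
split.
  pose dd c := projT1 (cid (Hpc c)).
  have Hd : forall c e, (dd c <= e)%N ->
      Svanishes (fun f g : kHom k C c c => kcomp f g) (@alphaX k n C alpha c) e.+1.
    by move=> c e le; apply: (Svanishes_up (mulA_c c) (tauC_c c) le (projT2 (cid (Hpc c)))).
  by exists (\sum_(c < n) dd c)%N => a; apply: (Vall Halpha Hd).
move=> degs Hdeg.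
have Hd : forall c e, (degs c <= e)%N ->
    Svanishes (fun f g : kHom k C c c => kcomp f g) (@alphaX k n C alpha c) e.+1.
  by move=> c e le; apply: (Svanishes_up (mulA_c c) (tauC_c c) le (Hdeg c).1).
split; first by move=> a; apply: (Vall Halpha Hd).
move=> e lt Hv.
have := Hv (fun _ => @Aone k n C).
rewrite (Spc_ones (@AmulA k n C) (Atau_trace Halpha) (@Amul1 k n C)).
apply/eqP; apply/prodf_neq0 => i _.
have Et : \sum_(c < n) @alpha c (Defs.idm C c) = ((\sum_(c < n) degs c)%N)%:R.
  rewrite natr_sum; apply: eq_bigr => c _.
  rewrite -(degree_tau_one (mulA_c c) (tauC_c c) (@kcomp1 k n C c c) char0 (Hdeg c)).
  by rewrite /alphaX; symmetry; exact: sumf_kid.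
rewrite Atau_one Et subr_eq0; apply/negP => /eqP /(natr_inj0 char0) E.
have : (i < \sum_(c < n) degs c)%N by apply: leq_ltn_trans lt; rewrite -ltnS.
by rewrite E ltnn.
Qed.
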